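(* Let $X_1,X_2,\dots$ be iid real random variables with common continuous distribution function $F$ having a (Lebesgue) density $f$. For integers $1\le j<k$ let $g_{j,k}$ be the density of $G_{j,k}(x):=\Pr(X_j\le x\mid X_j\text{ and }X_k\text{ are records})$, namely $g_{j,k}(x)=\frac{jk}{k-j}f(x)\left(F^{j-1}(x)-F^{k-1}(x)\right)$, and let $g_j$ be the density of $G_j(x):=\Pr(X_j\le x\mid X_j\text{ is a record})$, namely $g_j(x)=jf(x)F^{j-1}(x)$. Then \[ D_{KL}(g_{j,k},g_j)=\frac{j}{k}. \]
   Context: $X_m$ is a record if $X_m>\max(X_1,\dots,X_{m-1})$; $X_1$ is always a record. For densities $p,q$ the Kullback–Leibler divergence is $D_{KL}(p\|q)=\int_{-\infty}^{\infty}p(x)\log\frac{p(x)}{q(x)}\,dx$, and the Kullback–Leibler distance is $D_{KL}(p,q)=D_{KL}(p\|q)+D_{KL}(q\|p)$. *)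

(* Defs.v *)
(* Lebesgue integrals over R are rendered by
   the Henstock--Kurzweil (gauge) integral, which is elementary to define and
   agrees with the Lebesgue integral on Lebesgue-integrable functions. *)
From Stdlib Require Import Reals Lra List.
Import ListNotations.
Open Scope R_scope.

(* A tagged partition of [x, b] is a list of (tag, right endpoint) pairs;
   [tagged_fine delta x b l] says l is a delta-fine tagged partition of [x,b]:
   consecutive points x = x0 < x1 < ... < xn = b, tags t_i in [x_{i-1}, x_i],
   and [x_{i-1}, x_i] is contained in (t_i - delta t_i, t_i + delta t_i). *)
Fixpoint tagged_fine (delta : R -> R) (x b : R) (l : list (R * R)) : Prop :=
  match l with
  | nil => x = b
  | (t, y) :: l' =>
      x < y /\ x <= t <= y /\ t - delta t < x /\ y < t + delta t /\
      tagged_fine delta y b l'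
  end.

Fixpoint rsum (f : R -> R) (x : R) (l : list (R * R)) : R :=
  match l with
  | nil => 0
  | (t, y) :: l' => f t * (y - x) + rsum f y l'
  end.

Definition HK_int (f : R -> R) (a b I : R) : Prop :=
  forall eps, 0 < eps ->
    exists delta : R -> R, (forall t, 0 < delta t) /\
      forall l, tagged_fine delta a b l -> Rabs (rsum f a l - I) < eps.

(* Integral over (-oo, x]  (improper limit, Hake's theorem). *)
Definition HK_int_to (f : R -> R) (x I : R) : Prop :=
  (forall a, a <= x -> exists J, HK_int f a x J) /\
  forall eps, 0 < eps -> exists M, forall a J,
      a <= - M -> HK_int f a x J -> Rabs (J - I) < eps.

Definition HK_int_R (f : R -> R) (I : R) : Prop :=
  (forall a b, a <= b -> exists J, HK_int f a b J) /\
  forall eps, 0 < eps -> exists M, forall a b J,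
      a <= - M -> M <= b -> HK_int f a b J -> Rabs (J - I) < eps.

Definition is_density_of (f F : R -> R) : Prop :=
  (forall x, 0 <= f x) /\ (forall x, HK_int_to f x (F x)) /\ HK_int_R f 1.

Definition kl_integrand (p q : R -> R) (x : R) : R :=
  if Req_dec_T (p x) 0 then 0 else p x * ln (p x / q x).

Definition KL_div (p q : R -> R) (d : R) : Prop := HK_int_R (kl_integrand p q) d.

Definition KL_dist (p q : R -> R) (d : R) : Prop :=
  exists d1 d2, KL_div p q d1 /\ KL_div q p d2 /\ d = d1 + d2.

Definition g_jk (f F : R -> R) (j k : nat) (x : R) : R :=
  (INR j * INR k / (INR k - INR j)) * f x * (F x ^ (j - 1) - F x ^ (k - 1)).

Definition g_j (f F : R -> R) (j : nat) (x : R) : R :=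
  INR j * f x * F x ^ (j - 1).

(* Main.v *)
Require Import Defs.
From Stdlib Require Import Reals.
Open Scope R_scope.
From Stdlib Require Import Lra Lia List IndefiniteDescription FunctionalExtensionality ZArith Classical_Prop.
From Coquelicot Require Import Coquelicot.
Import ListNotations.
Open Scope R_scope.
Fixpoint psum (g : R -> R -> R -> R) (x : R) (l : list (R*R)) : R :=
  match l with nil => 0 | (t,y)::l' => g x t y + psum g y l' end.

Fixpoint chain (sel : R -> R -> R -> Prop) (x b : R) (l : list (R*R)) : Prop :=
  match l with
  | nil => x = b
  | (t,y)::l' => x < y /\ x <= t <= y /\ sel x t y /\ chain sel y b l'
  end.

Definition finep (d : R -> R) (x t y : R) : Prop := t - d t < x /\ y < t + d t.

Lemma tf_chain d x b l : tagged_fine d x b l <-> chain (finep d) x b l.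
Proof.
  revert x; induction l as [|[t y] l IH]; intros x; simpl; [tauto|].
  rewrite IH; unfold finep; tauto.
Qed.

Lemma rsum_psum f x l : rsum f x l = psum (fun x t y => f t * (y - x)) x l.
Proof. revert x; induction l as [|[t y] l IH]; intros x; simpl; auto. rewrite IH; auto. Qed.

Lemma chain_mono (s1 s2 : R -> R -> R -> Prop) x b l :
  (forall x t y, x < y -> x <= t <= y -> s1 x t y -> s2 x t y) ->
  chain s1 x b l -> chain s2 x b l.
Proof.
  intros H; revert x; induction l as [|[t y] l IH]; intros x; simpl; auto.
  intros (h1&h2&h3&h4); repeat split; auto; try lra.
Qed.

Lemma chain_app s x y z l1 l2 : chain s x y l1 -> chain s y z l2 -> chain s x z (l1 ++ l2).
Proof.
  revert x; induction l1 as [|[t w] l IH]; intros x; simpl.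
  - intros ->; auto.
  - intros (h1&h2&h3&h4) h5; repeat split; auto; try lra.
Qed.

Lemma chain_le s x b l : chain s x b l -> x <= b.
Proof.
  revert x; induction l as [|[t y] l IH]; intros x; simpl.
  - intros ->; lra.
  - intros (h1&h2&h3&h4); specialize (IH _ h4); lra.
Qed.

Lemma psum_app s g x y l1 l2 : chain s x y l1 -> psum g x (l1 ++ l2) = psum g x l1 + psum g y l2.
Proof.
  revert x; induction l1 as [|[t w] l IH]; intros x; simpl.
  - intros ->; lra.
  - intros (h1&h2&h3&h4). rewrite (IH _ h4); lra.
Qed.

Lemma psum_tele s (G : R -> R) x b l : chain s x b l ->
  psum (fun x t y => G y - G x) x l = G b - G x.
Proof.
  revert x; induction l as [|[t y] l IH]; intros x; simpl.
  - intros ->; lra.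
  - intros (h1&h2&h3&h4). rewrite (IH _ h4); lra.
Qed.

Lemma psum_plus g1 g2 x l : psum (fun x t y => g1 x t y + g2 x t y) x l = psum g1 x l + psum g2 x l.
Proof. revert x; induction l as [|[t y] l IH]; intros x; simpl; [lra|]. rewrite IH; lra. Qed.

Lemma psum_scal c g x l : psum (fun x t y => c * g x t y) x l = c * psum g x l.
Proof. revert x; induction l as [|[t y] l IH]; intros x; simpl; [lra|]. rewrite IH; lra. Qed.

Lemma psum_le s g1 g2 x b l : chain s x b l ->
  (forall x t y, x < y -> x <= t <= y -> s x t y -> g1 x t y <= g2 x t y) ->
  psum g1 x l <= psum g2 x l.
Proof.
  intros Hc H; revert x Hc; induction l as [|[t y] l IH]; intros x; simpl; [lra|].
  intros (h1&h2&h3&h4). specialize (IH _ h4). specialize (H _ _ _ h1 h2 h3). lra.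
Qed.

Lemma psum_ext s g1 g2 x b l : chain s x b l ->
  (forall x t y, x < y -> x <= t <= y -> s x t y -> g1 x t y = g2 x t y) ->
  psum g1 x l = psum g2 x l.
Proof.
  intros Hc H; revert x Hc; induction l as [|[t y] l IH]; intros x; simpl; [lra|].
  intros (h1&h2&h3&h4). rewrite (IH _ h4). rewrite (H _ _ _ h1 h2 h3). lra.
Qed.

Lemma psum_abs g x l : Rabs (psum g x l) <= psum (fun x t y => Rabs (g x t y)) x l.
Proof.
  revert x; induction l as [|[t y] l IH]; intros x; simpl.
  - rewrite Rabs_R0; lra.
  - specialize (IH y). pose proof (Rabs_triang (g x t y) (psum g y l)). lra.
Qed.

Lemma zero_of_small z : (forall eps, 0 < eps -> Rabs z < eps) -> z = 0.
Proof.
  intros H. destruct (Req_dec z 0) as [e|n]; auto.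
  specialize (H (Rabs z) (Rabs_pos_lt _ n)). lra.
Qed.

Lemma le_of_small z c : (forall eps, 0 < eps -> z < c + eps) -> z <= c.
Proof.
  intros H. destruct (Rle_dec z c) as [h|h]; auto.
  specialize (H (z - c)). lra.
Qed.

Lemma choice_fun {A B : Type} (P : A -> B -> Prop) :
  (forall a, exists b, P a b) -> exists g : A -> B, forall a, P a (g a).
Proof.
  intros H. exists (fun a => proj1_sig (constructive_indefinite_description _ (H a))).
  intros a. exact (proj2_sig (constructive_indefinite_description _ (H a))).
Qed.

Lemma Rabs_sub_le a b : Rabs (a - b) <= Rabs a + Rabs b.
Proof. unfold Rminus. pose proof (Rabs_triang a (-b)). rewrite Rabs_Ropp in H. exact H. Qed.

Lemma cousin d : (forall t, 0 < d t) -> forall a b, a <= b -> exists l, tagged_fine d a b l.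
Proof.
  intros Hd a b Hab.
  set (E := fun y => a <= y <= b /\ exists l, tagged_fine d a y l).
  assert (HEb : bound E) by (exists b; intros y [h _]; lra).
  assert (HEa : exists y, E y) by (exists a; split; [lra| exists nil; simpl; auto]).
  destruct (completeness E HEb HEa) as [s [Hub Hlub]].
  assert (Has : a <= s) by (apply Hub; split; [lra|exists nil; simpl; auto]).
  assert (Hsb : s <= b) by (apply Hlub; intros y [h _]; lra).
  assert (Hy : exists y, E y /\ s - d s < y).
  { apply Classical_Prop.NNPP; intros Hn.
    assert (s <= s - d s). { apply Hlub. intros y Ey. apply Rnot_lt_le. intros h. apply Hn; eauto. }
    specialize (Hd s); lra. }
  destruct Hy as [y [[Hy1 [l Hl]] Hy2]].
  assert (Hys : y <= s) by (apply Hub; split; auto; exists l; auto).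
  set (s' := Rmin b (s + d s / 2)).
  pose proof (Hd s) as Hds.
  assert (Hs'1 : s <= s') by (unfold s'; apply Rmin_glb; lra).
  assert (Hs'2 : s' <= s + d s / 2) by apply Rmin_r.
  assert (Hs'3 : s' <= b) by apply Rmin_l.
  destruct (Rlt_dec y s') as [hlt|hge].
  - assert (Ts' : tagged_fine d a s' (l ++ [(s, s')])).
    { apply tf_chain. apply chain_app with y; [apply tf_chain; auto|].
      simpl; unfold finep; repeat split; lra. }
    destruct (Req_dec s' b) as [e|ne].
    + rewrite <- e; eauto.
    + assert (s' = s + d s / 2).
      { unfold s', Rmin in *. destruct (Rle_dec b (s + d s / 2)); lra. }
      assert (s' <= s) by (apply Hub; split; [lra|eauto]). lra.
  - assert (y = s) by lra. assert (s' = s) by lra.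
    assert (s = b).
    { unfold s', Rmin in *. destruct (Rle_dec b (s + d s / 2)); lra. }
    exists l. rewrite <- H1, <- H; exact Hl.
Qed.

Lemma rsum_nonneg f x b l : (forall t, 0 <= f t) -> chain (fun _ _ _ => True) x b l -> 0 <= rsum f x l.
Proof.
  intros Hf; revert x; induction l as [|[t y] l IH]; intros x; simpl; [lra|].
  intros (h1&h2&h3&h4). specialize (IH _ h4). specialize (Hf t). nra.
Qed.

Lemma tf_triv d x b l : tagged_fine d x b l -> chain (fun _ _ _ => True) x b l.
Proof. intros H; apply tf_chain in H. eapply chain_mono; [|exact H]. auto. Qed.

Lemma HK_unique f a b I1 I2 : a <= b -> HK_int f a b I1 -> HK_int f a b I2 -> I1 = I2.
Proof.
  intros Hab H1 H2. apply Rminus_diag_uniq. apply zero_of_small. intros eps Heps.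
  destruct (H1 (eps/2)) as [d1 [Hd1 P1]]; [lra|].
  destruct (H2 (eps/2)) as [d2 [Hd2 P2]]; [lra|].
  assert (Hd : forall t, 0 < Rmin (d1 t) (d2 t)) by (intros t; apply Rmin_glb_lt; auto).
  destruct (cousin _ Hd a b Hab) as [l Hl].
  apply tf_chain in Hl.
  assert (L1 : tagged_fine d1 a b l).
  { apply tf_chain. eapply chain_mono; [|exact Hl]. unfold finep; intros x t y _ _ [h1 h2].
    pose proof (Rmin_l (d1 t) (d2 t)); split; lra. }
  assert (L2 : tagged_fine d2 a b l).
  { apply tf_chain. eapply chain_mono; [|exact Hl]. unfold finep; intros x t y _ _ [h1 h2].
    pose proof (Rmin_r (d1 t) (d2 t)); split; lra. }
  specialize (P1 _ L1); specialize (P2 _ L2).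
  replace (I1 - I2) with ((rsum f a l - I2) - (rsum f a l - I1)) by ring.
  pose proof (Rabs_sub_le (rsum f a l - I2) (rsum f a l - I1)). lra.
Qed.

Lemma tf_min_l d1 d2 x b l : tagged_fine (fun t => Rmin (d1 t) (d2 t)) x b l -> tagged_fine d1 x b l.
Proof.
  intros Hl; apply tf_chain in Hl; apply tf_chain. eapply chain_mono; [|exact Hl].
  unfold finep; intros x' t y _ _ [h1 h2]. pose proof (Rmin_l (d1 t) (d2 t)); split; lra.
Qed.
Lemma tf_min_r d1 d2 x b l : tagged_fine (fun t => Rmin (d1 t) (d2 t)) x b l -> tagged_fine d2 x b l.
Proof.
  intros Hl; apply tf_chain in Hl; apply tf_chain. eapply chain_mono; [|exact Hl].
  unfold finep; intros x' t y _ _ [h1 h2]. pose proof (Rmin_r (d1 t) (d2 t)); split; lra.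
Qed.

Lemma HK_add f a x y J1 J2 J : a <= x -> x <= y ->
  HK_int f a x J1 -> HK_int f x y J2 -> HK_int f a y J -> J = J1 + J2.
Proof.
  intros Hax Hxy H1 H2 H. apply Rminus_diag_uniq. apply zero_of_small. intros eps Heps.
  destruct (H1 (eps/3)) as [d1 [Hd1 P1]]; [lra|].
  destruct (H2 (eps/3)) as [d2 [Hd2 P2]]; [lra|].
  destruct (H (eps/3)) as [d [Hd P]]; [lra|].
  assert (Hm1 : forall t, 0 < Rmin (d t) (d1 t)) by (intros t; apply Rmin_glb_lt; auto).
  assert (Hm2 : forall t, 0 < Rmin (d t) (d2 t)) by (intros t; apply Rmin_glb_lt; auto).
  destruct (cousin _ Hm1 a x Hax) as [l1 L1].
  destruct (cousin _ Hm2 x y Hxy) as [l2 L2].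
  specialize (P1 _ (tf_min_r _ _ _ _ _ L1)). specialize (P2 _ (tf_min_r _ _ _ _ _ L2)).
  assert (L : tagged_fine d a y (l1 ++ l2)).
  { apply tf_chain; apply chain_app with x; apply tf_chain; eapply tf_min_l; eauto. }
  specialize (P _ L).
  rewrite !rsum_psum in *.
  rewrite (psum_app _ _ a x l1 l2) in P by (apply tf_chain; eapply tf_min_l; eauto).
  set (r1 := psum _ a l1) in *. set (r2 := psum _ x l2) in *.
  replace (J - (J1 + J2)) with ((r1 - J1) + (r2 - J2) - (r1 + r2 - J)) by ring.
  pose proof (Rabs_sub_le ((r1 - J1) + (r2 - J2)) (r1 + r2 - J)).
  pose proof (Rabs_triang (r1 - J1) (r2 - J2)). lra.
Qed.

Lemma HK_nonneg f a b J : (forall t, 0 <= f t) -> a <= b -> HK_int f a b J -> 0 <= J.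
Proof.
  intros Hf Hab H. apply Rnot_lt_le; intros Hlt.
  destruct (H (- J)) as [d [Hd P]]; [lra|].
  destruct (cousin _ Hd a b Hab) as [l L].
  specialize (P _ L). pose proof (rsum_nonneg f a b l Hf (tf_triv _ _ _ _ L)).
  apply Rabs_def2 in P. lra.
Qed.

Lemma Rabs_le_e z c : Rabs z <= c -> - c <= z <= c.
Proof. unfold Rabs; destruct (Rcase_abs z); intros; lra. Qed.

Definition dd (f F : R -> R) (x t y : R) : R := f t * (y - x) - (F y - F x).

Lemma density_int f F : is_density_of f F -> forall x y, x <= y -> HK_int f x y (F y - F x).
Proof.
  intros [Hf [Hto HR]] x y Hxy.
  destruct (proj1 HR x y Hxy) as [J HJ].
  replace (F y - F x) with J; auto.
  symmetry; apply Rminus_diag_uniq; apply zero_of_small; intros eps Heps.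
  destruct (proj2 (Hto x) (eps/2)) as [M1 HM1]; [lra|].
  destruct (proj2 (Hto y) (eps/2)) as [M2 HM2]; [lra|].
  set (a := Rmin x (Rmin (-M1) (-M2))).
  assert (ha1 : a <= x) by apply Rmin_l.
  assert (ha2 : a <= -M1) by (unfold a; eapply Rle_trans; [apply Rmin_r|apply Rmin_l]).
  assert (ha3 : a <= -M2) by (unfold a; eapply Rle_trans; [apply Rmin_r|apply Rmin_r]).
  destruct (proj1 (Hto x) a ha1) as [Jx HJx].
  destruct (proj1 (Hto y) a ltac:(lra)) as [Jy HJy].
  pose proof (HK_add f a x y Jx J Jy ha1 Hxy HJx HJ HJy).
  specialize (HM1 a Jx ha2 HJx). specialize (HM2 a Jy ha3 HJy).
  replace (F y - F x - J) with ((F y - Jy) - (F x - Jx)) by lra.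
  pose proof (Rabs_sub_le (F y - Jy) (F x - Jx)).
  rewrite <- Rabs_Ropp in HM1, HM2. replace (- (Jx - F x)) with (F x - Jx) in HM1 by ring.
  replace (- (Jy - F y)) with (F y - Jy) in HM2 by ring. lra.
Qed.

Lemma density_ge0 f F : is_density_of f F -> forall x, 0 <= F x.
Proof.
  intros Hd x. pose proof Hd as [Hf [Hto HR]].
  apply le_of_small; intros eps Heps.
  destruct (proj2 (Hto x) eps Heps) as [M HM].
  set (a := Rmin x (-M)).
  destruct (proj1 (Hto x) a (Rmin_l _ _)) as [J HJ].
  specialize (HM a J (Rmin_r _ _) HJ).
  pose proof (HK_nonneg f a x J Hf (Rmin_l _ _) HJ).
  apply Rabs_def2 in HM. lra.
Qed.

Lemma density_mono f F : is_density_of f F -> forall x y, x <= y -> F x <= F y.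
Proof.
  intros Hd x y Hxy. pose proof (density_int f F Hd x y Hxy).
  pose proof (HK_nonneg f x y _ (proj1 Hd) Hxy H). lra.
Qed.

Lemma density_le1 f F : is_density_of f F -> forall x, F x <= 1.
Proof.
  intros Hd x. pose proof Hd as [Hf [Hto HR]].
  apply le_of_small; intros eps Heps.
  destruct (proj2 HR (eps/2)) as [M HM]; [lra|].
  destruct (proj2 (Hto x) (eps/2)) as [M1 HM1]; [lra|].
  set (a := Rmin x (Rmin (-M) (-M1))). set (b := Rmax x M).
  assert (ha1 : a <= x) by apply Rmin_l.
  assert (ha2 : a <= -M) by (unfold a; eapply Rle_trans; [apply Rmin_r|apply Rmin_l]).
  assert (ha3 : a <= -M1) by (unfold a; eapply Rle_trans; [apply Rmin_r|apply Rmin_r]).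
  assert (hab : a <= b) by (unfold b; pose proof (Rmax_l x M); lra).
  pose proof (density_int f F Hd a b hab) as Hab.
  specialize (HM a b _ ha2 (Rmax_r _ _) Hab).
  specialize (HM1 a _ ha3 (density_int f F Hd a x ha1)).
  pose proof (density_mono f F Hd x b (Rmax_l _ _)).
  apply Rabs_def2 in HM. apply Rabs_def2 in HM1. lra.
Qed.

Lemma density_tails f F : is_density_of f F -> forall rho, 0 < rho ->
  exists M, 0 <= M /\ (forall b, M <= b -> 1 - rho < F b) /\ (forall a, a <= - M -> F a < rho).
Proof.
  intros Hd rho Hrho. pose proof Hd as [Hf [Hto HR]].
  destruct (proj2 HR (rho/2)) as [M0 HM0]; [lra|].
  exists (Rmax M0 0). split; [apply Rmax_r|]. split.
  - intros b Hb.
    destruct (proj2 (Hto b) (rho/2)) as [Mb HMb]; [lra|].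
    set (a := Rmin (- Rmax M0 0) (- Mb)).
    pose proof (Rmax_r M0 0). pose proof (Rmax_l M0 0).
    assert (ha : a <= b) by (unfold a; pose proof (Rmin_l (- Rmax M0 0) (- Mb)); lra).
    destruct (proj1 (Hto b) a ha) as [J HJ].
    specialize (HMb a J (Rmin_r _ _) HJ).
    assert (a <= - M0) by (unfold a; pose proof (Rmin_l (- Rmax M0 0) (- Mb)); lra).
    specialize (HM0 a b J H1 ltac:(lra) HJ).
    apply Rabs_def2 in HMb. apply Rabs_def2 in HM0. lra.
  - intros a Ha. pose proof (Rmax_r M0 0). pose proof (Rmax_l M0 0).
    set (M := Rmax M0 0) in *.
    pose proof (density_int f F Hd a M ltac:(lra)).
    specialize (HM0 a M _ ltac:(lra) ltac:(lra) H1).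
    pose proof (density_le1 f F Hd M).
    apply Rabs_def2 in HM0. lra.
Qed.

Lemma splice f F (Hint : forall x y, x <= y -> HK_int f x y (F y - F x)) d (Hd : forall t, 0 < d t)
  (K : R -> R -> R -> bool) eta (Heta : 0 < eta) b :
  forall l x, chain (fun x t y => K x t y = true -> finep d x t y) x b l ->
  exists Q, tagged_fine d x b Q /\
    Rabs (rsum f x Q - (F b - F x) - psum (fun x t y => if K x t y then dd f F x t y else 0) x l)
      <= INR (length l) * eta.
Proof.
  induction l as [|[t y] l IH]; intros x Hc.
  - simpl in Hc. subst. exists nil. simpl. split; auto.
    replace (0 - (F b - F b) - 0) with 0 by ring. rewrite Rabs_R0; lra.
  - destruct Hc as (h1&h2&h3&h4).
    destruct (IH y h4) as [Q' [HQ' HQ'e]].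
    change (length ((t,y)::l)) with (S (length l)). rewrite S_INR.
    pose proof (pos_INR (length l)).
    simpl psum. destruct (K x t y) eqn:EK.
    + exists ((t,y)::Q'). split.
      * simpl. destruct (h3 eq_refl). repeat split; auto; lra.
      * simpl rsum.
        set (S' := psum (fun x0 t0 y0 => if K x0 t0 y0 then dd f F x0 t0 y0 else 0) y l) in *.
        replace (f t * (y - x) + rsum f y Q' - (F b - F x) - (dd f F x t y + S'))
          with (rsum f y Q' - (F b - F y) - S') by (unfold dd; ring).
        lra.
    + destruct (Hint x y ltac:(lra) eta Heta) as [dR [HdR PR]].
      assert (Hm : forall t, 0 < Rmin (d t) (dR t)) by (intros; apply Rmin_glb_lt; auto).
      destruct (cousin _ Hm x y ltac:(lra)) as [R HR].
      specialize (PR _ (tf_min_r _ _ _ _ _ HR)).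
      exists (R ++ Q'). split.
      * apply tf_chain. apply chain_app with y; apply tf_chain; auto. eapply tf_min_l; eauto.
      * rewrite !rsum_psum in *.
        rewrite (psum_app _ _ x y R Q') by (apply tf_chain; eapply tf_min_l; eauto).
        set (S' := psum (fun x0 t0 y0 => if K x0 t0 y0 then dd f F x0 t0 y0 else 0) y l) in *.
        set (rR := psum _ x R) in *. set (rQ := psum _ y Q') in *.
        replace (rR + rQ - (F b - F x) - (0 + S')) with ((rR - (F y - F x)) + (rQ - (F b - F y) - S')) by ring.
        pose proof (Rabs_triang (rR - (F y - F x)) (rQ - (F b - F y) - S')). lra.
Qed.

Lemma SH f F (Hint : forall x y, x <= y -> HK_int f x y (F y - F x)) a b d (Hd : forall t, 0 < d t) eps
  (Hacc : forall Q, tagged_fine d a b Q -> Rabs (rsum f a Q - (F b - F a)) < eps)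
  (sel : R -> R -> R -> bool) l
  (Hc : chain (fun x t y => sel x t y = true -> finep d x t y) a b l) :
  psum (fun x t y => if sel x t y then Rabs (dd f F x t y) else 0) a l <= 2 * eps.
Proof.
  set (K1 := fun x t y => if sel x t y then (if Rle_dec 0 (dd f F x t y) then true else false) else false).
  set (K2 := fun x t y => if sel x t y then (if Rle_dec 0 (dd f F x t y) then false else true) else false).
  assert (C1 : chain (fun x t y => K1 x t y = true -> finep d x t y) a b l).
  { eapply chain_mono; [|exact Hc]. intros x t y _ _ H. cbv beta in H. unfold K1. destruct (sel x t y); [intros _; apply H; reflexivity | intros e; discriminate e]. }
  assert (C2 : chain (fun x t y => K2 x t y = true -> finep d x t y) a b l).
  { eapply chain_mono; [|exact Hc]. intros x t y _ _ H. cbv beta in H. unfold K2. destruct (sel x t y); [intros _; apply H; reflexivity | intros e; discriminate e]. }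
  rewrite (psum_ext _ _ (fun x t y => (if K1 x t y then dd f F x t y else 0) + (-1) * (if K2 x t y then dd f F x t y else 0)) a b l Hc).
  2:{ intros x t y _ _ _. unfold K1, K2. destruct (sel x t y); [|lra].
      destruct (Rle_dec 0 (dd f F x t y)). rewrite Rabs_right; lra. rewrite Rabs_left; lra. }
  rewrite psum_plus, psum_scal.
  set (L := INR (length l)). assert (HL : 0 <= L) by apply pos_INR.
  apply le_of_small; intros e He.
  set (eta := e / (2 * (L + 1))).
  assert (Heta : 0 < eta) by (unfold eta; apply Rdiv_lt_0_compat; lra).
  assert (HLe : 2 * (L * eta) < e).
  { unfold eta. apply Rmult_lt_reg_r with (2 * (L+1)); [lra|].
    field_simplify; [|lra]. nra. }
  destruct (splice f F Hint d Hd K1 eta Heta b l a C1) as [Q1 [HQ1 E1]].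
  destruct (splice f F Hint d Hd K2 eta Heta b l a C2) as [Q2 [HQ2 E2]].
  specialize (Hacc _ HQ1) as A1. specialize (Hacc _ HQ2) as A2.
  apply Rabs_def2 in A1. apply Rabs_def2 in A2.
  apply Rabs_le_e in E1. apply Rabs_le_e in E2. fold L in E1, E2. lra.
Qed.

Lemma cont_eps g x : continuity_pt g x -> forall e, 0 < e ->
  exists r, 0 < r /\ forall z, Rabs (z - x) < r -> Rabs (g z - g x) < e.
Proof.
  intros H e He. unfold continuity_pt, continue_in, limit1_in, limit_in in H.
  destruct (H e He) as [r [Hr Hz]]. exists r; split; auto.
  intros z Hzx. destruct (Req_dec z x) as [->|n].
  - replace (g x - g x) with 0 by ring. rewrite Rabs_R0; auto.
  - apply (Hz z). split; [split; [exact I| auto]|]. simpl. unfold R_dist. auto.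
Qed.

Lemma F_cont f F (Hd : is_density_of f F) t rho : 0 < rho ->
  exists eta, 0 < eta /\ forall s, Rabs (s - t) < eta -> Rabs (F s - F t) < rho.
Proof.
  intros Hr. pose proof (density_int f F Hd) as Hint.
  destruct (Hint (t-1) (t+1) ltac:(lra) (rho/4)) as [d' [Hd' Hacc]]; [lra|].
  pose proof (proj1 Hd t) as Hft.
  set (eta := Rmin 1 (Rmin (d' t) (rho / (4 * (f t + 1))))).
  assert (He1 : eta <= 1) by apply Rmin_l.
  assert (He2 : eta <= d' t) by (unfold eta; eapply Rle_trans; [apply Rmin_r|apply Rmin_l]).
  assert (He3 : eta <= rho / (4 * (f t + 1))) by (unfold eta; eapply Rle_trans; [apply Rmin_r|apply Rmin_r]).
  assert (Hep : 0 < eta).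
  { unfold eta. apply Rmin_glb_lt; [lra|]. apply Rmin_glb_lt; auto. apply Rdiv_lt_0_compat; lra. }
  exists eta; split; auto. intros s Hs.
  assert (Hq : forall h, 0 <= h < eta -> f t * h < rho / 4).
  { intros h Hh. assert (h * (4 * (f t + 1)) < rho).
    { apply Rlt_le_trans with (eta * (4 * (f t + 1))). apply Rmult_lt_compat_r; lra.
      apply Rle_trans with (rho / (4 * (f t + 1)) * (4 * (f t + 1))). apply Rmult_le_compat_r; lra.
      apply Req_le. field. lra. }
    nra. }
  destruct (Rtotal_order s t) as [hlt|[heq|hgt]].
  - apply Rabs_def2 in Hs.
    set (sel := fun x (_ _ : R) => if Req_dec_T x s then true else false).
    assert (Hc : chain (fun x t0 y => sel x t0 y = true -> finep d' x t0 y) (t-1) (t+1) [(t-1, s); (t, t); (t, t+1)]).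
    { simpl. unfold sel, finep.
      destruct (Req_dec_T (t-1) s); [lra|]. destruct (Req_dec_T s s); [|lra]. destruct (Req_dec_T t s); [lra|].
      repeat split; try lra; intros; try discriminate. }
    pose proof (SH f F Hint (t-1) (t+1) d' Hd' (rho/4) Hacc sel _ Hc) as HS.
    simpl in HS. unfold sel in HS.
    destruct (Req_dec_T (t-1) s); [lra|]. destruct (Req_dec_T s s); [|lra]. destruct (Req_dec_T t s); [lra|].
    unfold dd in HS. specialize (Hq (t - s) ltac:(lra)).
    rewrite Rabs_minus_sym.
    replace (F t - F s) with (f t * (t - s) - (f t * (t - s) - (F t - F s))) by ring.
    pose proof (Rabs_sub_le (f t * (t - s)) (f t * (t - s) - (F t - F s))).
    rewrite (Rabs_right (f t * _)) in H by nra. lra.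
  - subst. replace (F t - F t) with 0 by ring. rewrite Rabs_R0; auto.
  - apply Rabs_def2 in Hs.
    set (sel := fun x (_ _ : R) => if Req_dec_T x t then true else false).
    assert (Hc : chain (fun x t0 y => sel x t0 y = true -> finep d' x t0 y) (t-1) (t+1) [(t-1, t); (t, s); (s, t+1)]).
    { simpl. unfold sel, finep.
      destruct (Req_dec_T (t-1) t); [lra|]. destruct (Req_dec_T t t); [|lra]. destruct (Req_dec_T s t); [lra|].
      repeat split; try lra; intros; try discriminate. }
    pose proof (SH f F Hint (t-1) (t+1) d' Hd' (rho/4) Hacc sel _ Hc) as HS.
    simpl in HS. unfold sel in HS.
    destruct (Req_dec_T (t-1) t); [lra|]. destruct (Req_dec_T t t); [|lra]. destruct (Req_dec_T s t); [lra|].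
    unfold dd in HS. specialize (Hq (s - t) ltac:(lra)).
    replace (F s - F t) with (f t * (s - t) - (f t * (s - t) - (F s - F t))) by ring.
    pose proof (Rabs_sub_le (f t * (s - t)) (f t * (s - t) - (F s - F t))).
    rewrite (Rabs_right (f t * _)) in H by nra. lra.
Qed.

Fixpoint mg (dm : nat -> R -> R) (n : nat) (t : R) : R :=
  match n with O => dm O t | S n' => Rmin (dm (S n') t) (mg dm n' t) end.

Lemma mg_pos dm n t : (forall m, 0 < dm m t) -> 0 < mg dm n t.
Proof. intros H; induction n; simpl; auto. apply Rmin_glb_lt; auto. Qed.

Lemma mg_le dm n m t : (m <= n)%nat -> mg dm n t <= dm m t.
Proof.
  induction n; intros Hm; simpl.
  - assert (m = 0%nat) by lia. subst; lra.
  - destruct (Nat.eq_dec m (S n)) as [->|ne]; [apply Rmin_l|].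
    eapply Rle_trans; [apply Rmin_r|]. apply IHn; lia.
Qed.

Lemma Nbound r : Rabs r <= INR (Z.to_nat (up (Rabs r))).
Proof.
  destruct (archimed (Rabs r)) as [h1 _]. pose proof (Rabs_pos r).
  assert (0 <= up (Rabs r))%Z.
  { apply le_IZR. lra. }
  rewrite INR_IZR_INZ, Z2Nat.id by auto. lra.
Qed.

Lemma psum_zero x l : psum (fun _ _ _ => 0) x l = 0.
Proof. revert x; induction l as [|[t y] l IH]; intros x; simpl; auto. rewrite IH; ring. Qed.

Lemma psum_minus g1 g2 x l : psum g1 x l - psum g2 x l = psum (fun x t y => g1 x t y - g2 x t y) x l.
Proof. revert x; induction l as [|[t y] l IH]; intros x; simpl; [ring|]. rewrite <- IH; ring. Qed.

Lemma exists_bound (N : R -> nat) (l : list (R*R)) : exists M, List.Forall (fun p => (N (fst p) <= M)%nat) l.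
Proof.
  induction l as [|[t y] l [M HM]].
  - exists 0%nat; constructor.
  - exists (Nat.max M (N t)). constructor; simpl; [apply Nat.le_max_r|].
    eapply List.Forall_impl; [|exact HM]. intros p Hp. eapply Nat.le_trans; [exact Hp|apply Nat.le_max_l].
Qed.

Lemma psum_forall (N : R -> nat) M g1 g2 x l : List.Forall (fun p => (N (fst p) <= M)%nat) l ->
  (forall x t y, (N t <= M)%nat -> g1 x t y = g2 x t y) -> psum g1 x l = psum g2 x l.
Proof.
  intros HF H; revert x; induction l as [|[t y] l IH]; intros x; simpl; auto.
  inversion HF; subst. rewrite IH by auto. rewrite H by auto. auto.
Qed.

Lemma bad_zero (G F : R -> R) (Fmono : forall x y, x <= y -> F x <= F y) (F1 : forall x, F x <= 1)
  s b l : forall x, F x = 1 -> chain s x b l ->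
  psum (fun x t y => if Req_dec_T (F t) 1 then Rabs (G 1 - G (F x)) else 0) x l = 0.
Proof.
  induction l as [|[t y] l IH]; intros x Hx Hc; simpl; auto.
  destruct Hc as (h1&h2&h3&h4).
  assert (F y = 1) by (pose proof (Fmono x y ltac:(lra)); pose proof (F1 y); lra).
  rewrite (IH y H h4). rewrite Hx. replace (G 1 - G 1) with 0 by ring. rewrite Rabs_R0.
  destruct (Req_dec_T (F t) 1); lra.
Qed.

Lemma bad_le (G F : R -> R) (Fmono : forall x y, x <= y -> F x <= F y) (F1 : forall x, F x <= 1)
  e0 (He0 : 0 <= e0) b l : forall x,
  chain (fun x t y => F t = 1 -> Rabs (G 1 - G (F x)) <= e0) x b l ->
  psum (fun x t y => if Req_dec_T (F t) 1 then Rabs (G 1 - G (F x)) else 0) x l <= e0.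
Proof.
  induction l as [|[t y] l IH]; intros x Hc; simpl; [lra|].
  destruct Hc as (h1&h2&h3&h4).
  destruct (Req_dec_T (F t) 1) as [e|n].
  - assert (F y = 1) by (pose proof (Fmono t y ltac:(lra)); pose proof (F1 y); lra).
    assert (C : chain (fun _ _ _ => True) y b l) by (eapply chain_mono; [|exact h4]; auto).
    rewrite (bad_zero G F Fmono F1 _ b l y H C). specialize (h3 e). lra.
  - specialize (IH y h4). lra.
Qed.

Lemma core f F (Hd : is_density_of f F) (phi Phi : R -> R)
  (Hphi1 : phi 1 = 0)
  (Hphic : forall w, 0 <= w < 1 -> forall e, 0 < e -> exists r, 0 < r /\
       forall z, 0 <= z <= 1 -> Rabs (z - w) < r -> Rabs (phi z - phi w) < e)
  (HPhid : forall u, 0 < u < 1 -> is_derive Phi u (phi u))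
  (HPhic : forall u, continuity_pt Phi u)
  a b (Hab : a <= b) :
  HK_int (fun x => f x * phi (F x)) a b (Phi (F b) - Phi (F a)).
Proof.
  intros eps Heps. set (e0 := eps / 8).
  assert (He0 : 0 < e0) by (unfold e0; lra).
  pose proof (density_int f F Hd) as Hint.
  pose proof (density_ge0 f F Hd) as F0. pose proof (density_le1 f F Hd) as F1.
  pose proof (density_mono f F Hd) as Fmono.
  assert (Hdm0 : forall m : nat, exists d, (forall t, 0 < d t) /\ forall Q, tagged_fine d a b Q ->
            Rabs (rsum f a Q - (F b - F a)) < e0 / 2 ^ m).
  { intros m. apply (Hint a b Hab). apply Rdiv_lt_0_compat; auto. apply pow_lt; lra. }
  destruct (choice_fun _ Hdm0) as [dm Hdm].
  set (N := fun t => Z.to_nat (up (Rabs (phi (F t))))).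
  assert (HdC0 : forall t, exists r, 0 < r /\
     (F t < 1 -> exists rho, 0 < rho /\ rho <= 1 - F t /\
         (forall z, 0 <= z <= 1 -> Rabs (z - F t) < rho -> Rabs (phi z - phi (F t)) < e0) /\
         (forall s, Rabs (s - t) < r -> Rabs (F s - F t) < rho)) /\
     (F t = 1 -> forall s, Rabs (s - t) < r -> Rabs (Phi (F s) - Phi 1) < e0)).
  { intros t. destruct (Rle_lt_or_eq_dec (F t) 1 (F1 t)) as [hlt|heq].
    - destruct (Hphic (F t) (conj (F0 t) hlt) e0 He0) as [r0 [Hr0 Hphir]].
      set (rho := Rmin r0 (1 - F t)).
      assert (Hrho : 0 < rho) by (apply Rmin_glb_lt; lra).
      destruct (F_cont f F Hd t rho Hrho) as [eta [Heta Hcont]].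
      exists eta. split; auto. split; [|intros; lra].
      intros _. exists rho. split; auto. split; [apply Rmin_r|]. split; auto.
      intros z Hz Hz'. apply Hphir; auto. eapply Rlt_le_trans; [exact Hz'|apply Rmin_l].
    - destruct (cont_eps Phi 1 (HPhic 1) e0 He0) as [r1 [Hr1 HP1]].
      destruct (F_cont f F Hd t r1 Hr1) as [eta [Heta Hcont]].
      exists eta. split; auto. split; [intros; lra|].
      intros _ s Hs. apply HP1. rewrite <- heq. apply Hcont; auto. }
  destruct (choice_fun _ HdC0) as [dC HdC].
  set (delta := fun t => Rmin (mg dm (N t) t) (dC t)).
  assert (Hdpos : forall t, 0 < delta t).
  { intros t. unfold delta. apply Rmin_glb_lt. apply mg_pos; intros m; apply (proj1 (Hdm m)).
    apply (proj1 (HdC t)). }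
  exists delta. split; auto. intros l Hl.
  apply tf_chain in Hl.
  rewrite rsum_psum.
  rewrite <- (psum_tele _ (fun u => Phi (F u)) a b l Hl).
  rewrite psum_minus.
  set (ee := fun x t y => phi (F t) * (F y - F x) - (Phi (F y) - Phi (F x))).
  rewrite (psum_ext _ _ (fun x t y => phi (F t) * dd f F x t y + ee x t y) a b l Hl)
    by (intros; unfold ee, dd; ring).
  rewrite psum_plus.
  assert (P1 : Rabs (psum (fun x t y => phi (F t) * dd f F x t y) a l) <= 2 * e0).
  { eapply Rle_trans; [apply psum_abs|].
    eapply Rle_trans.
    { apply (psum_le _ _ (fun x t y => INR (N t) * Rabs (dd f F x t y)) a b l Hl).
      intros x t y _ _ _. rewrite Rabs_mult. apply Rmult_le_compat_r; [apply Rabs_pos|apply Nbound]. }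
    assert (LC : forall M, psum (fun x t y => INR (Nat.min (N t) M) * Rabs (dd f F x t y)) a l
                           <= 2 * e0 * (1 - / 2 ^ M)).
    { induction M.
      - rewrite (psum_ext _ _ (fun _ _ _ => 0) a b l Hl).
        + rewrite psum_zero. simpl. lra.
        + intros. rewrite Nat.min_0_r. simpl. ring.
      - rewrite (psum_ext _ _ (fun x t y => INR (Nat.min (N t) M) * Rabs (dd f F x t y) +
                  (if (S M <=? N t)%nat then Rabs (dd f F x t y) else 0)) a b l Hl).
        2:{ intros x t y _ _ _. destruct (S M <=? N t)%nat eqn:E.
            - apply Nat.leb_le in E. rewrite Nat.min_r, Nat.min_r by lia. rewrite S_INR. ring.
            - apply Nat.leb_nle in E. rewrite Nat.min_l, Nat.min_l by lia. ring. }
        rewrite psum_plus.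
        assert (HS : psum (fun x t y => if (S M <=? N t)%nat then Rabs (dd f F x t y) else 0) a l
                     <= 2 * (e0 / 2 ^ (S M))).
        { apply (SH f F Hint a b (dm (S M)) (proj1 (Hdm (S M))) _ (proj2 (Hdm (S M)))).
          eapply chain_mono; [|exact Hl]. intros x t y _ _ [h1 h2] E.
          apply Nat.leb_le in E.
          assert (delta t <= dm (S M) t).
          { unfold delta. eapply Rle_trans; [apply Rmin_l|]. apply mg_le; auto. }
          unfold finep; split; lra. }
        assert (E2 : / 2 ^ S M = / 2 * / 2 ^ M) by (simpl; rewrite Rinv_mult; auto).
        rewrite E2 in *. unfold Rdiv in HS. rewrite E2 in HS. lra. }
    destruct (exists_bound N l) as [M HM].
    specialize (LC M).
    rewrite (psum_forall N M _ (fun x t y => INR (Nat.min (N t) M) * Rabs (dd f F x t y)) a l HM)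
      by (intros; rewrite Nat.min_l by auto; auto).
    assert (0 < / 2 ^ M) by (apply Rinv_0_lt_compat, pow_lt; lra). nra. }
  assert (Pe : forall x t y, x < y -> x <= t <= y -> finep delta x t y ->
     Rabs (ee x t y) <= e0 * (F y - F x) + (if Req_dec_T (F t) 1 then Rabs (Phi 1 - Phi (F x)) else 0)).
  { intros x t y hxy hxt [hf1 hf2].
    assert (hd : delta t <= dC t) by apply Rmin_r.
    assert (hx : Rabs (x - t) < dC t) by (apply Rabs_def1; lra).
    assert (hy : Rabs (y - t) < dC t) by (apply Rabs_def1; lra).
    pose proof (Fmono x t ltac:(lra)). pose proof (Fmono t y ltac:(lra)).
    destruct (Req_dec_T (F t) 1) as [e|n].
    - unfold ee. rewrite e, Hphi1.
      assert (F y = 1) by (pose proof (F1 y); lra). rewrite H1.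
      replace (0 * (1 - F x) - (Phi 1 - Phi (F x))) with (- (Phi 1 - Phi (F x))) by ring.
      rewrite Rabs_Ropp. assert (0 <= e0 * (1 - F x)) by (apply Rmult_le_pos; lra). lra.
    - assert (hlt : F t < 1) by (pose proof (F1 t); lra).
      destruct (proj1 (proj2 (HdC t)) hlt) as [rho [Hrho [Hrho1 [Hphir HFr]]]].
      specialize (HFr x hx) as Hx. specialize (HFr y hy) as Hy.
      apply Rabs_def2 in Hx. apply Rabs_def2 in Hy.
      rewrite Rplus_0_r.
      destruct (Req_dec (F x) (F y)) as [eq|neq].
      + unfold ee. rewrite eq. replace (phi (F t) * (F y - F y) - (Phi (F y) - Phi (F y))) with 0 by ring.
        rewrite Rabs_R0. lra.
      + assert (hlt2 : F x < F y) by lra.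
        destruct (MVT_gen Phi (F x) (F y) phi) as [c [Hc Hmvt]].
        * rewrite Rmin_left, Rmax_right by lra. intros z Hz. apply HPhid. pose proof (F0 x). lra.
        * intros z _. apply HPhic.
        * rewrite Rmin_left, Rmax_right in Hc by lra.
          assert (Hpc : Rabs (phi c - phi (F t)) < e0).
          { apply Hphir. pose proof (F0 x). split; lra. apply Rabs_def1; lra. }
          unfold ee. rewrite Hmvt.
          replace (phi (F t) * (F y - F x) - phi c * (F y - F x)) with (- ((phi c - phi (F t)) * (F y - F x))) by ring.
          rewrite Rabs_Ropp, Rabs_mult, (Rabs_right (F y - F x)) by lra.
          apply Rmult_le_compat_r; lra. }
  assert (P2 : Rabs (psum ee a l) <= e0 * (F b - F a) + e0).
  { eapply Rle_trans; [apply psum_abs|].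
    eapply Rle_trans; [apply (psum_le _ _ _ a b l Hl Pe)|].
    rewrite psum_plus, psum_scal.
    rewrite (psum_tele _ F a b l Hl).
    assert (psum (fun x t y => if Req_dec_T (F t) 1 then Rabs (Phi 1 - Phi (F x)) else 0) a l <= e0).
    { apply (bad_le Phi F Fmono F1 e0 ltac:(lra) b l a).
      eapply chain_mono; [|exact Hl]. intros x t y hxy hxt [hf1 hf2] e.
      assert (hd : delta t <= dC t) by apply Rmin_r.
      assert (hx : Rabs (x - t) < dC t) by (apply Rabs_def1; lra).
      pose proof (proj2 (proj2 (HdC t)) e x hx). rewrite Rabs_minus_sym. lra. }
    lra. }
  pose proof (F0 a). pose proof (F1 b).
  pose proof (Rabs_triang (psum (fun x t y => phi (F t) * dd f F x t y) a l) (psum ee a l)).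
  assert (e0 * (F b - F a) <= e0) by (rewrite <- (Rmult_1_r e0) at 2; apply Rmult_le_compat_l; lra).
  unfold e0 in *. lra.
Qed.

Lemma core_R f F (Hd : is_density_of f F) (phi Phi : R -> R)
  (Hphi1 : phi 1 = 0)
  (Hphic : forall w, 0 <= w < 1 -> forall e, 0 < e -> exists r, 0 < r /\
       forall z, 0 <= z <= 1 -> Rabs (z - w) < r -> Rabs (phi z - phi w) < e)
  (HPhid : forall u, 0 < u < 1 -> is_derive Phi u (phi u))
  (HPhic : forall u, continuity_pt Phi u) :
  HK_int_R (fun x => f x * phi (F x)) (Phi 1 - Phi 0).
Proof.
  split.
  - intros a b Hab. eexists. apply core; auto.
  - intros eps Heps.
    destruct (cont_eps Phi 1 (HPhic 1) (eps/2)) as [r1 [Hr1 H1]]; [lra|].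
    destruct (cont_eps Phi 0 (HPhic 0) (eps/2)) as [r0 [Hr0 H0]]; [lra|].
    destruct (density_tails f F Hd (Rmin r1 r0)) as [M [HM [Hb Ha]]]; [apply Rmin_glb_lt; auto|].
    exists M. intros a b J Ha' Hb' HJ.
    assert (Hab : a <= b) by lra.
    rewrite (HK_unique _ a b J (Phi (F b) - Phi (F a)) Hab HJ (core f F Hd phi Phi Hphi1 Hphic HPhid HPhic a b Hab)).
    specialize (Hb b Hb'). specialize (Ha a Ha').
    pose proof (Rmin_l r1 r0). pose proof (Rmin_r r1 r0).
    pose proof (density_le1 f F Hd b). pose proof (density_ge0 f F Hd a).
    assert (A1 : Rabs (Phi (F b) - Phi 1) < eps/2) by (apply H1; apply Rabs_def1; lra).
    assert (A0 : Rabs (Phi (F a) - Phi 0) < eps/2) by (apply H0; apply Rabs_def1; lra).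
    replace (Phi (F b) - Phi (F a) - (Phi 1 - Phi 0)) with ((Phi (F b) - Phi 1) - (Phi (F a) - Phi 0)) by ring.
    pose proof (Rabs_sub_le (Phi (F b) - Phi 1) (Phi (F a) - Phi 0)). lra.
Qed.

Definition Hf (s : R) : R := s * ln s.

Lemma ln_le0 x : x <= 0 -> ln x = 0.
Proof. intros h. unfold ln. destruct (Rlt_dec 0 x) as [r|r]; [exfalso; lra|reflexivity]. Qed.

Lemma ln_lt_id w : 0 < w -> ln w < w.
Proof.
  intros hw. destruct (Rle_dec (ln w) 0); [lra|].
  pose proof (exp_ineq1 (ln w) ltac:(lra)). rewrite exp_ln in H by auto. lra.
Qed.

Lemma zlnz_bound z : 0 < z < 1 -> Rabs (z * ln z) <= 2 * sqrt z.
Proof.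
  intros [h0 h1]. set (y := sqrt z).
  assert (hy : 0 < y) by (apply sqrt_lt_R0; auto).
  assert (hyy : y * y = z) by (apply sqrt_sqrt; lra).
  assert (hy1 : y < 1) by (destruct (Rlt_dec y 1); auto; nra).
  assert (Hl : ln z = 2 * ln y) by (rewrite <- hyy, ln_mult by auto; ring).
  assert (Hly : ln y < 0) by (rewrite <- ln_1; apply ln_increasing; auto).
  assert (Hli : - ln y < / y) by (rewrite <- ln_Rinv by auto; apply ln_lt_id; apply Rinv_0_lt_compat; auto).
  rewrite Hl. rewrite Rabs_left by nra.
  rewrite <- hyy.
  assert (y * y * (- ln y) <= y * y * / y) by (apply Rmult_le_compat_l; nra).
  replace (y * y * / y) with y in H by (field; lra). nra.
Qed.

Lemma cont_of_eps g x : (forall e, 0 < e -> exists r, 0 < r /\ forall z, Rabs (z - x) < r -> Rabs (g z - g x) < e) ->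
  continuity_pt g x.
Proof.
  intros H. unfold continuity_pt, continue_in, limit1_in, limit_in.
  intros e He. destruct (H e He) as [r [Hr Hz]]. exists r; split; auto.
  intros z [[_ _] hz]. apply Hz. exact hz.
Qed.

Lemma Hf_cont s : continuity_pt Hf s.
Proof.
  destruct (Rtotal_order s 0) as [hlt|[heq|hgt]].
  - apply cont_of_eps. intros e He. exists (- s). split; [lra|].
    intros z hz. apply Rabs_def2 in hz. unfold Hf. rewrite !ln_le0 by lra.
    replace (z * 0 - s * 0) with 0 by ring. rewrite Rabs_R0; auto.
  - subst. apply cont_of_eps. intros e He.
    exists (Rmin 1 (e * e / 4)). split.
    { apply Rmin_glb_lt; [lra|]. apply Rdiv_lt_0_compat; nra. }
    intros z hz. unfold Hf. rewrite ln_le0 with (x := 0) by lra.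
    replace (z - 0) with z in hz by ring. replace (0 * 0) with 0 by ring. rewrite Rminus_0_r.
    pose proof (Rmin_l 1 (e * e / 4)). pose proof (Rmin_r 1 (e * e / 4)).
    apply Rabs_def2 in hz.
    destruct (Rle_dec z 0).
    + rewrite ln_le0 by auto. rewrite Rmult_0_r, Rabs_R0; auto.
    + eapply Rle_lt_trans; [apply zlnz_bound; lra|].
      assert (sqrt z < e / 2).
      { rewrite <- (sqrt_Rsqr (e/2)) by lra. apply sqrt_lt_1_alt. split; [lra|]. unfold Rsqr. lra. }
      lra.
  - apply derivable_continuous_pt. unfold Hf.
    apply derivable_pt_mult; [apply derivable_pt_id|].
    exists (/ s). apply derivable_pt_lim_ln; auto.
Qed.

Definition At (a b : nat) (u : R) : R :=
  INR (S a) * INR (S a + S b) / (INR (S a + S b) - INR (S a)) * u ^ a *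
  ((1 - u ^ S b) * ln (INR (S a + S b) / (INR (S a + S b) - INR (S a))) + Hf (1 - u ^ S b)).
Definition Bf (a b : nat) (u : R) : R :=
  INR (S a) * u ^ a * (ln ((INR (S a + S b) - INR (S a)) / INR (S a + S b)) - ln (1 - u ^ S b)).
Definition Bt (a b : nat) (u : R) : R := if Req_dec_T u 1 then 0 else Bf a b u.
Definition PhiT (a b : nat) (u : R) : R :=
  INR (S a) / (INR (S a + S b) - INR (S a)) *
    ((u ^ S a - u ^ (S a + S b)) * ln (INR (S a + S b) / (INR (S a + S b) - INR (S a))) +
     u ^ S a * Hf (1 - u ^ S b)) + INR (S a) / INR (S a + S b) * u ^ (S a + S b).
Definition PhiA (a b : nat) (u : R) : R := RInt (At a b) 0 u.
Definition PhiB (a b : nat) (u : R) : R := PhiT a b u - PhiA a b u.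

Lemma cont_of_exd (g : R -> R) (x : R) : ex_derive g x -> continuity_pt g x.
Proof. intros H. apply continuity_pt_filterlim. apply ex_derive_continuous in H. exact H. Qed.

Lemma kj a b : INR (S a + S b) - INR (S a) = INR (S b).
Proof. rewrite plus_INR; ring. Qed.

Lemma INRS_pos n : 0 < INR (S n).
Proof. apply lt_0_INR; lia. Qed.

Lemma At_cont a b u : continuity_pt (At a b) u.
Proof.
  unfold At.
  apply (continuity_pt_mult (fun u => INR (S a) * INR (S a + S b) / (INR (S a + S b) - INR (S a)) * u ^ a)
           (fun u => (1 - u ^ S b) * ln (INR (S a + S b) / (INR (S a + S b) - INR (S a))) + Hf (1 - u ^ S b))).
  - apply cont_of_exd. auto_derive. auto.
  - apply (continuity_pt_plus (fun u => (1 - u ^ S b) * ln (INR (S a + S b) / (INR (S a + S b) - INR (S a))))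
            (fun u => Hf (1 - u ^ S b))).
    + apply cont_of_exd. auto_derive. auto.
    + apply (continuity_pt_comp (fun u => 1 - u ^ S b) Hf).
      * apply cont_of_exd. auto_derive. auto.
      * apply Hf_cont.
Qed.

Lemma PhiT_cont a b u : continuity_pt (PhiT a b) u.
Proof.
  unfold PhiT.
  apply (continuity_pt_plus
    (fun u => INR (S a) / (INR (S a + S b) - INR (S a)) *
    ((u ^ S a - u ^ (S a + S b)) * ln (INR (S a + S b) / (INR (S a + S b) - INR (S a))) +
     u ^ S a * Hf (1 - u ^ S b))) (fun u => INR (S a) / INR (S a + S b) * u ^ (S a + S b))).
  2:{ apply cont_of_exd. auto_derive. auto. }
  apply (continuity_pt_mult (fun _ => INR (S a) / (INR (S a + S b) - INR (S a)))
    (fun u => ((u ^ S a - u ^ (S a + S b)) * ln (INR (S a + S b) / (INR (S a + S b) - INR (S a))) +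
     u ^ S a * Hf (1 - u ^ S b)))).
  { apply continuity_pt_const. intros x y; reflexivity. }
  apply (continuity_pt_plus (fun u => (u ^ S a - u ^ (S a + S b)) * ln (INR (S a + S b) / (INR (S a + S b) - INR (S a))))
     (fun u => u ^ S a * Hf (1 - u ^ S b))).
  { apply cont_of_exd. auto_derive. auto. }
  apply (continuity_pt_mult (fun u => u ^ S a) (fun u => Hf (1 - u ^ S b))).
  { apply cont_of_exd. auto_derive. auto. }
  apply (continuity_pt_comp (fun u => 1 - u ^ S b) Hf).
  - apply cont_of_exd. auto_derive. auto.
  - apply Hf_cont.
Qed.

Lemma PhiA_der a b u : is_derive (PhiA a b) u (At a b u).
Proof.
  unfold PhiA. apply is_derive_RInt with (a := 0).
  - apply filter_forall. intros x. apply (@RInt_correct R_CompleteNormedModule). apply (@ex_RInt_continuous R_CompleteNormedModule).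
    intros z _. apply continuity_pt_filterlim. apply At_cont.
  - apply continuity_pt_filterlim. apply At_cont.
Qed.

Lemma PhiA_cont a b u : continuity_pt (PhiA a b) u.
Proof. apply cont_of_exd. eexists. apply PhiA_der. Qed.

Lemma PhiB_cont a b u : continuity_pt (PhiB a b) u.
Proof.
  unfold PhiB. apply (continuity_pt_minus (PhiT a b) (PhiA a b)). apply PhiT_cont. apply PhiA_cont.
Qed.

Lemma Hf0 : Hf 0 = 0.
Proof. unfold Hf; ring. Qed.

Lemma At1 a b : At a b 1 = 0.
Proof. unfold At. rewrite !pow1. replace (1 - 1) with 0 by ring. rewrite Hf0. ring. Qed.

Lemma Bt1 a b : Bt a b 1 = 0.
Proof. unfold Bt. destruct (Req_dec_T 1 1); [auto|lra]. Qed.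

Lemma PhiT_01 a b : PhiT a b 1 - PhiT a b 0 = INR (S a) / INR (S a + S b).
Proof.
  unfold PhiT. rewrite !pow1. rewrite !pow_i by lia. replace (1 - 1) with 0 by ring. rewrite Hf0.
  rewrite kj. pose proof (INRS_pos b).
  assert (INR (S a + S b) <> 0) by (apply Rgt_not_eq, lt_0_INR; lia).
  field. split; lra.
Qed.

Ltac fold_INR := repeat match goal with |- context [match ?n with 0%nat => 1 | S _ => INR ?n + 1 end] =>
   change (match n with 0%nat => 1 | S _ => INR n + 1 end) with (INR (S n)) end.

Lemma PhiT_der a b u : 0 < u < 1 -> is_derive (PhiT a b) u (At a b u + Bf a b u).
Proof.
  intros Hu.
  assert (Hs : 0 < 1 - u ^ S b).
  { pose proof (pow_lt_1_compat u (S b) ltac:(lra) ltac:(lia)). lra. }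
  unfold PhiT, At, Bf, Hf. auto_derive.
  - simpl in Hs. lra.
  - fold_INR. rewrite kj. simpl pow.
    rewrite pow_add. simpl pow.
    assert (HS : S (a + S b) = (S a + S b)%nat) by reflexivity. rewrite HS. clear HS.
    rewrite kj.
    set (L1 := ln (INR (S a + S b) / INR (S b))).
    assert (EL : ln (INR (S b) / INR (S a + S b)) = - L1).
    { unfold L1. rewrite <- ln_Rinv. f_equal. field. split; apply Rgt_not_eq, lt_0_INR; lia.
      apply Rdiv_lt_0_compat; apply lt_0_INR; lia. }
    rewrite EL.
    set (L2 := ln (1 + - (u * u ^ b))).
    replace (ln (1 - u * u ^ b)) with L2 by (unfold L2; f_equal; ring).
    assert (Ek : INR (S a + S b) = INR (S a) + INR (S b)) by (rewrite plus_INR; ring).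
    rewrite Ek.
    pose proof (INRS_pos a). pose proof (INRS_pos b).
    simpl in Hs.
    field. repeat split; lra.
Qed.

Lemma PhiB_der a b u : 0 < u < 1 -> is_derive (PhiB a b) u (Bt a b u).
Proof.
  intros Hu. unfold Bt. destruct (Req_dec_T u 1); [lra|].
  apply (is_derive_ext (fun x => minus (PhiT a b x) (PhiA a b x))).
  { intros t. unfold PhiB, minus, plus, opp; simpl. ring. }
  replace (Bf a b u) with (minus (At a b u + Bf a b u) (At a b u)) by (unfold minus, plus, opp; simpl; ring).
  apply (@is_derive_minus R_AbsRing R_NormedModule (PhiT a b) (PhiA a b) u). apply PhiT_der; auto. apply PhiA_der.
Qed.

Lemma At_conte a b w : 0 <= w < 1 -> forall e, 0 < e -> exists r, 0 < r /\
   forall z, 0 <= z <= 1 -> Rabs (z - w) < r -> Rabs (At a b z - At a b w) < e.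
Proof.
  intros _ e He. destruct (cont_eps _ _ (At_cont a b w) e He) as [r [Hr H]].
  exists r; split; auto.
Qed.

Lemma Bt_conte a b w : 0 <= w < 1 -> forall e, 0 < e -> exists r, 0 < r /\
   forall z, 0 <= z <= 1 -> Rabs (z - w) < r -> Rabs (Bt a b z - Bt a b w) < e.
Proof.
  intros Hw e He.
  assert (Hs : w ^ S b < 1) by (pose proof (pow_lt_1_compat w (S b) Hw ltac:(lia)); lra).
  assert (C : continuity_pt (Bf a b) w).
  { apply cont_of_exd. unfold Bf. auto_derive. simpl in Hs. lra. }
  destruct (cont_eps _ _ C e He) as [r [Hr H]].
  exists (Rmin r (1 - w)). split; [apply Rmin_glb_lt; lra|].
  intros z Hz Hzw. pose proof (Rmin_l r (1 - w)). pose proof (Rmin_r r (1 - w)).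
  apply Rabs_def2 in Hzw as Hzw'.
  unfold Bt. destruct (Req_dec_T z 1); [lra|]. destruct (Req_dec_T w 1); [lra|].
  apply H. lra.
Qed.

Lemma pow_le_1 u n : 0 <= u <= 1 -> u ^ n <= 1.
Proof. intros H. rewrite <- (pow1 n). apply pow_incr. lra. Qed.

Lemma klA f F a b x : 0 <= f x -> 0 <= F x <= 1 ->
  kl_integrand (g_jk f F (S a) (S a + S b)) (g_j f F (S a)) x = f x * At a b (F x).
Proof.
  intros Hf0 HF. unfold kl_integrand, g_jk, g_j, At, Hf.
  replace (S a - 1)%nat with a by lia. replace (S a + S b - 1)%nat with (a + S b)%nat by lia.
  rewrite pow_add. rewrite kj.
  set (u := F x) in *. set (U := u ^ a). set (V := u ^ S b).
  set (L := ln (INR (S a + S b) / INR (S b))).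
  pose proof (INRS_pos a). pose proof (INRS_pos b).
  assert (Hk : 0 < INR (S a + S b)) by (apply lt_0_INR; lia).
  assert (HU : 0 <= U) by (apply pow_le; lra).
  assert (HV : V <= 1) by (apply pow_le_1; auto).
  set (C := INR (S a) * INR (S a + S b) / INR (S b)).
  assert (HC : 0 < C) by (unfold C; apply Rdiv_lt_0_compat; nra).
  destruct (Req_dec_T (C * f x * (U - U * V)) 0) as [e|n].
  - assert (E : f x * (U - U * V) = 0).
    { apply Rmult_eq_reg_l with C; [|lra]. rewrite Rmult_0_r, <- e. ring. }
    replace (f x * (C * U * ((1 - V) * L + (1 - V) * ln (1 - V)))) with (C * (f x * (U - U * V)) * (L + ln (1 - V))) by ring.
    rewrite E. ring.
  - assert (Hf : f x <> 0) by (intros h; apply n; rewrite h; ring).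
    assert (HU' : U <> 0) by (intros h; apply n; rewrite h; ring).
    assert (HV' : 1 - V <> 0) by (intros h; apply n; replace (U - U * V) with (U * (1 - V)) by ring; rewrite h; ring).
    replace (C * f x * (U - U * V) / (INR (S a) * f x * U)) with (INR (S a + S b) / INR (S b) * (1 - V)).
    2:{ unfold C. field. repeat split; lra. }
    rewrite ln_mult. 2:{ apply Rdiv_lt_0_compat; lra. } 2:{ lra. }
    fold L. unfold C. field. lra.
Qed.

Lemma klB f F a b x : 0 <= f x -> 0 <= F x <= 1 ->
  kl_integrand (g_j f F (S a)) (g_jk f F (S a) (S a + S b)) x = f x * Bt a b (F x).
Proof.
  intros Hf0 HF. unfold kl_integrand, g_jk, g_j, Bt, Bf.
  replace (S a - 1)%nat with a by lia. replace (S a + S b - 1)%nat with (a + S b)%nat by lia.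
  rewrite pow_add. rewrite kj.
  set (u := F x) in *. set (U := u ^ a). set (V := u ^ S b).
  pose proof (INRS_pos a). pose proof (INRS_pos b).
  assert (Hk : 0 < INR (S a + S b)) by (apply lt_0_INR; lia).
  assert (HU : 0 <= U) by (apply pow_le; lra).
  assert (HV : V <= 1) by (apply pow_le_1; auto).
  set (C := INR (S a) * INR (S a + S b) / INR (S b)).
  assert (HC : 0 < C) by (unfold C; apply Rdiv_lt_0_compat; nra).
  destruct (Req_dec_T (INR (S a) * f x * U) 0) as [e|n].
  - assert (E : f x * U = 0).
    { apply Rmult_eq_reg_l with (INR (S a)); [|lra]. rewrite Rmult_0_r, <- e. ring. }
    destruct (Req_dec_T u 1); [ring|].
    replace (f x * (INR (S a) * U * (ln (INR (S b) / INR (S a + S b)) - ln (1 - V))))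
      with (INR (S a) * (f x * U) * (ln (INR (S b) / INR (S a + S b)) - ln (1 - V))) by ring.
    rewrite E. ring.
  - assert (Hf : f x <> 0) by (intros h; apply n; rewrite h; ring).
    assert (HU' : U <> 0) by (intros h; apply n; rewrite h; ring).
    destruct (Req_dec_T u 1) as [e1|n1].
    + unfold V. rewrite e1, pow1. replace (C * f x * (U - U * 1)) with 0 by ring.
      unfold Rdiv. rewrite Rinv_0, Rmult_0_r. rewrite ln_le0 by lra. ring.
    + assert (HV1 : V < 1) by (unfold V; pose proof (pow_lt_1_compat u (S b) ltac:(lra) ltac:(lia)); lra).
      replace (INR (S a) * f x * U / (C * f x * (U - U * V))) with (INR (S b) / INR (S a + S b) / (1 - V)).
      2:{ unfold C. assert (U - U * V <> 0) by (replace (U - U * V) with (U * (1 - V)) by ring; apply Rmult_integral_contrapositive; split; [auto|lra]). field. repeat split; try lra; auto. }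
      rewrite ln_div. 2:{ apply Rdiv_lt_0_compat; lra. } 2:{ lra. }
      ring.
Qed.

Theorem proposition5 (f F : R -> R) (j k : nat)
  (Hdens : is_density_of f F) (Hj : (1 <= j)%nat) (Hjk : (j < k)%nat) :
  KL_dist (g_jk f F j k) (g_j f F j) (INR j / INR k).
Proof.
  destruct j as [|a]; [lia|].
  assert (Hb : exists b, k = (S a + S b)%nat) by (exists (k - S a - 1)%nat; lia).
  destruct Hb as [b ->].
  pose proof (density_ge0 f F Hdens) as F0. pose proof (density_le1 f F Hdens) as F1.
  pose proof (proj1 Hdens) as Hf0.
  exists (PhiA a b 1 - PhiA a b 0), (PhiB a b 1 - PhiB a b 0). split; [|split].
  - unfold KL_div.
    replace (kl_integrand (g_jk f F (S a) (S a + S b)) (g_j f F (S a))) with (fun x => f x * At a b (F x)).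
    2:{ apply functional_extensionality. intros x. symmetry. apply klA; auto. }
    apply core_R; auto. apply At1. apply At_conte. intros; apply PhiA_der. apply PhiA_cont.
  - unfold KL_div.
    replace (kl_integrand (g_j f F (S a)) (g_jk f F (S a) (S a + S b))) with (fun x => f x * Bt a b (F x)).
    2:{ apply functional_extensionality. intros x. symmetry. apply klB; auto. }
    apply core_R; auto. apply Bt1. apply Bt_conte. intros; apply PhiB_der; auto. apply PhiB_cont.
  - unfold PhiB. rewrite <- PhiT_01. ring.
Qed.
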